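(* Let $M(C,\bar\xi,\pi)$ be a Myller configuration with Darboux frame $(\bar\xi,\bar\mu,\bar v)$ and invariants $G,K,T$, with $(T(s),K(s))\neq(0,0)$ for all $s$. Define $$\sigma_v=\frac{K^{2}\left(\frac{T}{K}\right)'+(T^{2}+K^{2})G}{(T^{2}+K^{2})^{3/2}},$$ where $K^2\left(\frac{T}{K}\right)'$ stands for $T'K-TK'$. Then $C$ is a $\bar v$-helix in $M$ if and only if $\sigma_v$ is constant; in that case the constant angle $\omega$ between $\bar v$ and the axis satisfies $\cot\omega=\mp\sigma_v$ (for an appropriate sign).
   Context: Let $C$ be a smooth curve in $E^3$ parametrized by arclength $s$; primes denote $d/ds$. A Myller configuration $M(C,\bar\xi,\pi)$ consists of a smooth unit vector field $\bar\xi$ along $C$ and a smooth oriented plane field $\pi$ with $\bar\xi\in\pi$; $\bar v$ is the unit normal of $\pi$, $\bar\mu=\bar v\times\bar\xi$, and the Darboux frame satisfies $\bar\xi'=G\bar\mu+K\bar v$, $\bar\mu'=-G\bar\xi+T\bar v$, $\bar v'=-K\bar\xi-T\bar\mu$. $C$ is a $\bar v$-helix in $M$ if there are a constant unit vector $\bar d_v$ and a constant $\omega$ with $\langle\bar v,\bar d_v\rangle=\cos\omega$ along $C$. *)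

(* Defs.v *)
From Stdlib Require Import Reals.
From Coquelicot Require Import Coquelicot.
Open Scope R_scope.

Definition vec3 := (R * R * R)%type.
Definition vx (u : vec3) : R := fst (fst u).
Definition vy (u : vec3) : R := snd (fst u).
Definition vz (u : vec3) : R := snd u.
Definition mkv (x y z : R) : vec3 := (x, y, z).

Definition dot (u w : vec3) : R := vx u * vx w + vy u * vy w + vz u * vz w.
Definition cross (u w : vec3) : vec3 :=
  mkv (vy u * vz w - vz u * vy w)
      (vz u * vx w - vx u * vz w)
      (vx u * vy w - vy u * vx w).
Definition vadd (u w : vec3) : vec3 := mkv (vx u + vx w) (vy u + vy w) (vz u + vz w).
Definition vscal (a : R) (u : vec3) : vec3 := mkv (a * vx u) (a * vy u) (a * vz u).

Definition inI (a b : Rbar) (s : R) : Prop := Rbar_lt a s /\ Rbar_lt s b.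

Definition smooth_on (a b : Rbar) (f : R -> R) : Prop :=
  forall (n : nat) (s : R), inI a b s -> ex_derive_n f n s.

Definition vsmooth_on (a b : Rbar) (X : R -> vec3) : Prop :=
  smooth_on a b (fun s => vx (X s)) /\ smooth_on a b (fun s => vy (X s)) /\
  smooth_on a b (fun s => vz (X s)).

Definition vis_derive (X : R -> vec3) (s : R) (d : vec3) : Prop :=
  is_derive (fun t => vx (X t)) s (vx d) /\
  is_derive (fun t => vy (X t)) s (vy d) /\
  is_derive (fun t => vz (X t)) s (vz d).

(* A Myller configuration M(C, xi, pi) over the parameter interval (a,b):
   C = r (arclength parametrized), xi a unit vector field, the plane field pi
   encoded by its unit normal v (with xi in pi, i.e. xi . v = 0),
   mu = v x xi, and the Darboux frame equations with invariants G, K, T. *)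
Definition Myller_configuration (a b : Rbar) (r xi v : R -> vec3)
    (G K T : R -> R) : Prop :=
  vsmooth_on a b r /\ vsmooth_on a b xi /\ vsmooth_on a b v /\
  smooth_on a b G /\ smooth_on a b K /\ smooth_on a b T /\
  forall s, inI a b s ->
    (exists r', vis_derive r s r' /\ dot r' r' = 1) /\
    dot (xi s) (xi s) = 1 /\ dot (v s) (v s) = 1 /\ dot (xi s) (v s) = 0 /\
    vis_derive xi s (vadd (vscal (G s) (cross (v s) (xi s))) (vscal (K s) (v s))) /\
    vis_derive (fun t => cross (v t) (xi t)) s
      (vadd (vscal (- G s) (xi s)) (vscal (T s) (v s))) /\
    vis_derive v s
      (vadd (vscal (- K s) (xi s)) (vscal (- T s) (cross (v s) (xi s)))).

Definition v_helix_with (a b : Rbar) (v : R -> vec3) (d : vec3) (omega : R) : Prop :=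
  dot d d = 1 /\ forall s, inI a b s -> dot (v s) d = cos omega.

Definition v_helix (a b : Rbar) (v : R -> vec3) : Prop :=
  exists d omega, v_helix_with a b v d omega.

Definition sigma_v (G K T : R -> R) (s : R) : R :=
  (Derive T s * K s - T s * Derive K s + (T s ^ 2 + K s ^ 2) * G s)
  / (sqrt (T s ^ 2 + K s ^ 2)) ^ 3.

(* Main.v *)
Require Import Defs.
From Stdlib Require Import Reals Lra Psatz Classical.
From Coquelicot Require Import Coquelicot.
Open Scope R_scope.

Lemma inI_loc a b s : inI a b s -> locally s (inI a b).
Proof.
  intros [H1 H2].
  pose proof (open_Rbar_gt' (Finite s) a H1) as L1.
  pose proof (open_Rbar_lt' (Finite s) b H2) as L2.
  simpl in L1, L2.
  generalize (filter_and _ _ L1 L2). apply filter_imp. intros t [u w]. split; auto.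
Qed.

Lemma inI_between a b s1 s2 t : inI a b s1 -> inI a b s2 -> s1 <= t <= s2 -> inI a b t.
Proof.
  intros [A1 B1] [A2 B2] [T1 T2]. split.
  - apply (Rbar_lt_le_trans a (Finite s1) (Finite t)); auto.
  - apply (Rbar_le_lt_trans (Finite t) (Finite s2) b); auto.
Qed.

Lemma const_on a b (f : R -> R) :
  (forall s, inI a b s -> is_derive f s 0) ->
  forall s1 s2, inI a b s1 -> inI a b s2 -> f s1 = f s2.
Proof.
  intros Hd.
  assert (W: forall s1 s2, s1 <= s2 -> inI a b s1 -> inI a b s2 -> f s1 = f s2).
  { intros s1 s2 Hle I1 I2.
    destruct (MVT_gen f s1 s2 (fun _ => 0)) as [c [_ Hc]].
    - intros x Hx. rewrite Rmin_left in Hx by lra. rewrite Rmax_right in Hx by lra.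
      apply Hd. apply inI_between with s1 s2; auto; lra.
    - intros x Hx. rewrite Rmin_left in Hx by lra. rewrite Rmax_right in Hx by lra.
      apply continuity_pt_filterlim. apply (ex_derive_continuous (K:=R_AbsRing) (V:=R_NormedModule)).
      eexists. apply Hd. apply inI_between with s1 s2; auto; lra.
    - lra. }
  intros s1 s2 I1 I2. destruct (Rle_dec s1 s2).
  - auto.
  - symmetry; apply W; auto; lra.
Qed.

Lemma smooth_ex a b f s : smooth_on a b f -> inI a b s -> ex_derive f s.
Proof. intros H Hs. exact (H 1%nat s Hs). Qed.

Lemma dot_derive (X : R -> vec3) s X' w :
  vis_derive X s X' -> is_derive (fun t => dot (X t) w) s (dot X' w).
Proof.
  intros [H1 [H2 H3]]. unfold dot.
  set (fx := fun t => vx (X t)) in *. set (fy := fun t => vy (X t)) in *.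
  set (fz := fun t => vz (X t)) in *.
  change (is_derive (fun t => fx t * vx w + fy t * vy w + fz t * vz w) s
   (vx X' * vx w + vy X' * vy w + vz X' * vz w)).
  rewrite <- (is_derive_unique _ _ _ H1), <- (is_derive_unique _ _ _ H2), <- (is_derive_unique _ _ _ H3).
  auto_derive.
  - repeat split; eexists; eassumption.
  - rewrite !Rmult_1_l; reflexivity.
Qed.

Lemma inhabited_I a b : Rbar_lt a b -> exists s, inI a b s.
Proof.
  intros H. unfold inI.
  destruct a as [a| |]; destruct b as [b| |]; simpl in *; try tauto.
  - exists ((a+b)/2); simpl; lra.
  - exists (a+1); simpl; lra.
  - exists (b-1); simpl; lra.
  - exists 0; simpl; auto.
Qed.

Lemma p_derive (T K : R -> R) s : ex_derive T s -> ex_derive K s -> 0 < T s ^ 2 + K s ^ 2 ->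
  is_derive (fun t => T t / sqrt (T t ^ 2 + K t ^ 2)) s
    (K s * (Derive T s * K s - T s * Derive K s) / sqrt (T s ^ 2 + K s ^ 2) ^ 3).
Proof.
  intros HT HK Hp.
  assert (Hs := sqrt_lt_R0 _ Hp).
  assert (Hq := sqrt_sqrt _ (Rlt_le _ _ Hp)).
  auto_derive.
  - replace (T s * (T s * 1) + K s * (K s * 1)) with (T s ^ 2 + K s ^ 2) by ring.
    repeat split; auto; lra.
  - replace (T s * (T s * 1) + K s * (K s * 1)) with (T s ^ 2 + K s ^ 2) by ring.
    change (fun x => T x) with T. change (fun x => K x) with K.
    set (N := sqrt (T s ^ 2 + K s ^ 2)) in *.
    rewrite Hq.
    replace (N ^ 3) with (N * (T s ^ 2 + K s ^ 2)) by (rewrite <- Hq; ring).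
    field. lra.
Qed.

Lemma q_derive (T K : R -> R) s : ex_derive T s -> ex_derive K s -> 0 < T s ^ 2 + K s ^ 2 ->
  is_derive (fun t => - K t / sqrt (T t ^ 2 + K t ^ 2)) s
    (T s * (Derive T s * K s - T s * Derive K s) / sqrt (T s ^ 2 + K s ^ 2) ^ 3).
Proof.
  intros HT HK Hp.
  assert (Hs := sqrt_lt_R0 _ Hp).
  assert (Hq := sqrt_sqrt _ (Rlt_le _ _ Hp)).
  auto_derive.
  - replace (T s * (T s * 1) + K s * (K s * 1)) with (T s ^ 2 + K s ^ 2) by ring.
    repeat split; auto; lra.
  - replace (T s * (T s * 1) + K s * (K s * 1)) with (T s ^ 2 + K s ^ 2) by ring.
    change (fun x => T x) with T. change (fun x => K x) with K.
    set (N := sqrt (T s ^ 2 + K s ^ 2)) in *.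
    rewrite Hq.
    replace (N ^ 3) with (N * (T s ^ 2 + K s ^ 2)) by (rewrite <- Hq; ring).
    field. lra.
Qed.

Lemma deriv_e (x p y q : R -> R) s dx dp dy dq :
  is_derive x s dx -> is_derive p s dp -> is_derive y s dy -> is_derive q s dq ->
  is_derive (fun t => x t * p t + y t * q t) s (dx * p s + x s * dp + dy * q s + y s * dq).
Proof.
  intros H1 H2 H3 H4.
  rewrite <- (is_derive_unique _ _ _ H1), <- (is_derive_unique _ _ _ H2),
    <- (is_derive_unique _ _ _ H3), <- (is_derive_unique _ _ _ H4).
  auto_derive.
  - repeat split; eexists; eassumption.
  - change (fun t => x t) with x; change (fun t => p t) with p; change (fun t => y t) with y; change (fun t => q t) with q; ring.
Qed.

Lemma deriv_F (p q X M V : R -> R) S C s dp dq dX dM dV :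
  is_derive p s dp -> is_derive q s dq -> is_derive X s dX -> is_derive M s dM ->
  is_derive V s dV ->
  is_derive (fun t => S * p t * X t + S * q t * M t + C * V t) s
    (S * (dp * X s + p s * dX) + S * (dq * M s + q s * dM) + C * dV).
Proof.
  intros H1 H2 H3 H4 H5.
  rewrite <- (is_derive_unique _ _ _ H1), <- (is_derive_unique _ _ _ H2),
    <- (is_derive_unique _ _ _ H3), <- (is_derive_unique _ _ _ H4), <- (is_derive_unique _ _ _ H5).
  auto_derive.
  - repeat split; eexists; eassumption.
  - change (fun t => X t) with X; change (fun t => p t) with p; change (fun t => M t) with M; change (fun t => q t) with q; change (fun t => V t) with V; ring.
Qed.

Lemma deriv_scal (p : R -> R) e s dp : is_derive p s dp -> is_derive (fun t => e * p t) s (e * dp).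
Proof.
  intros H1. rewrite <- (is_derive_unique _ _ _ H1). auto_derive.
  - eexists; eassumption.
  - change (fun t => p t) with p; ring.
Qed.

Lemma pos_TK (T K : R) : (T, K) <> (0, 0) -> 0 < T ^ 2 + K ^ 2.
Proof.
  intros H. destruct (Req_dec T 0); destruct (Req_dec K 0); subst; try congruence; nra.
Qed.

Lemma dot_lin a u c w d : dot (vadd (vscal a u) (vscal c w)) d = a * dot u d + c * dot w d.
Proof. unfold dot, vadd, vscal, mkv, vx, vy, vz; simpl; ring. Qed.

Lemma gram d v xi : dot v v = 1 -> dot xi xi = 1 -> dot xi v = 0 ->
  dot xi d ^ 2 + dot (cross v xi) d ^ 2 + dot v d ^ 2 = dot d d.
Proof.
  intros H1 H2 H3.
  assert (E : dot (cross v xi) d ^ 2 = dot d d * dot v v * dot xi xi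
     + 2 * dot d v * dot v xi * dot xi d - dot d d * dot v xi ^ 2
     - dot v v * dot xi d ^ 2 - dot xi xi * dot d v ^ 2).
  { unfold dot, cross, mkv, vx, vy, vz; simpl; ring. }
  assert (dot v xi = 0) by (rewrite <- H3; unfold dot; ring).
  assert (dot d v = dot v d) by (unfold dot; ring).
  rewrite E, H1, H2. rewrite H. rewrite H0. ring.
Qed.

Lemma frame_facts v xi : dot v v = 1 -> dot xi xi = 1 -> dot xi v = 0 ->
  dot (cross v xi) (cross v xi) = 1 /\ dot v (cross v xi) = 0 /\ dot xi (cross v xi) = 0.
Proof.
  intros H1 H2 H3.
  assert (E : dot (cross v xi) (cross v xi) = dot v v * dot xi xi - dot xi v ^ 2).
  { unfold dot, cross, mkv, vx, vy, vz; simpl; ring. }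
  rewrite E, H1, H2, H3. split; [ring|].
  split; unfold dot, cross, mkv, vx, vy, vz; simpl; ring.
Qed.

Lemma part2 a b r xi v G K T d omega :
  Myller_configuration a b r xi v G K T ->
  (forall s, inI a b s -> (T s, K s) <> (0, 0)) ->
  v_helix_with a b v d omega ->
  exists e0, (forall s, inI a b s -> e0 ^ 2 = sin omega ^ 2) /\
     forall s, inI a b s -> cos omega = e0 * sigma_v G K T s.
Proof.
  intros [Hr [Hxi [Hv [HG [HK [HT Hloc]]]]]] Hnz [Hdd Hc].
  set (c := cos omega) in *.
  set (mu := fun t => cross (v t) (xi t)).
  set (x := fun t => dot (xi t) d).
  set (y := fun t => dot (mu t) d).
  set (N := fun t => sqrt (T t ^ 2 + K t ^ 2)).
  set (p := fun t => T t / N t).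
  set (q := fun t => - K t / N t).
  set (W := fun t => Derive T t * K t - T t * Derive K t).
  assert (F : forall s, inI a b s ->
    is_derive x s (G s * y s + K s * c) /\
    is_derive y s (- G s * x s + T s * c) /\
    K s * x s + T s * y s = 0 /\
    is_derive p s (K s * W s / N s ^ 3) /\
    is_derive q s (T s * W s / N s ^ 3) /\
    0 < N s /\ N s * N s = T s ^ 2 + K s ^ 2 /\
    p s ^ 2 + q s ^ 2 = 1 /\ p s * y s - q s * x s = 0 /\
    dot (xi s) (xi s) = 1 /\ dot (v s) (v s) = 1 /\ dot (xi s) (v s) = 0).
  { intros s Hs.
    destruct (Hloc s Hs) as [_ [Hxx [Hvv [Hxv [Dxi [Dmu Dv]]]]]].
    assert (Hp : 0 < T s ^ 2 + K s ^ 2) by (apply pos_TK; auto).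
    assert (HN : 0 < N s) by (apply sqrt_lt_R0; auto).
    assert (HN2 : N s * N s = T s ^ 2 + K s ^ 2) by (apply sqrt_sqrt; lra).
    assert (HA : K s * x s + T s * y s = 0).
    { pose proof (dot_derive _ _ _ d Dv) as D. rewrite dot_lin in D.
      assert (D0 : is_derive (fun t => dot (v t) d) s 0).
      { apply (is_derive_ext_loc (fun _ => c)).
        - generalize (inI_loc _ _ _ Hs). apply filter_imp. intros t Ht. symmetry; auto.
        - apply (is_derive_const (K:=R_AbsRing) (V:=R_NormedModule)). }
      apply is_derive_unique in D. apply is_derive_unique in D0.
      rewrite D0 in D. unfold x, y, mu. lra. }
    split.
    { pose proof (dot_derive _ _ _ d Dxi) as D. rewrite dot_lin, (Hc s Hs) in D. exact D. }
    split.
    { pose proof (dot_derive _ _ _ d Dmu) as D. rewrite dot_lin, (Hc s Hs) in D. exact D. }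
    split; [exact HA|].
    split.
    { apply p_derive; auto; eapply smooth_ex; eauto. }
    split.
    { apply q_derive; auto; eapply smooth_ex; eauto. }
    split; [exact HN|]. split; [exact HN2|].
    split.
    { unfold p, q. field_simplify; [|lra]. rewrite <- HN2. field. lra. }
    split.
    { unfold p, q. replace (T s / N s * y s - - K s / N s * x s) with
        ((K s * x s + T s * y s) / N s) by (field; lra). rewrite HA. field. lra. }
    auto. }
  set (e := fun t => x t * p t + y t * q t).
  assert (Econst : forall s1 s2, inI a b s1 -> inI a b s2 -> e s1 = e s2).
  { apply const_on. intros s Hs.
    destruct (F s Hs) as [Dx [Dy [HA [Dp [Dq [HN [HN2 _]]]]]]].
    pose proof (deriv_e _ _ _ _ _ _ _ _ _ Dx Dp Dy Dq) as D.
    replace 0 with ((G s * y s + K s * c) * p s + x s * (K s * W s / N s ^ 3) +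
      (- G s * x s + T s * c) * q s + y s * (T s * W s / N s ^ 3)); [exact D|].
    unfold p, q.
    transitivity ((K s * x s + T s * y s) * (G s / N s + W s / N s ^ 3)).
    - field. lra.
    - rewrite HA. ring. }
  destruct (classic (exists s0, inI a b s0)) as [[s0 Hs0]|Hno].
  2:{ exists 0. split; intros s Hs; exfalso; apply Hno; eauto. }
  exists (e s0).
  assert (Hxy : forall s, inI a b s -> x s = e s0 * p s /\ y s = e s0 * q s).
  { intros s Hs. rewrite (Econst s0 s Hs0 Hs).
    destruct (F s Hs) as [_ [_ [_ [_ [_ [_ [_ [Hpq [Hf _]]]]]]]]].
    unfold e. split.
    - transitivity ((x s * p s + y s * q s) * p s - (p s * y s - q s * x s) * q s
          + x s * (1 - (p s ^ 2 + q s ^ 2))); [ring|]. rewrite Hpq, Hf. ring.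
    - transitivity ((x s * p s + y s * q s) * q s + (p s * y s - q s * x s) * p s
          + y s * (1 - (p s ^ 2 + q s ^ 2))); [ring|]. rewrite Hpq, Hf. ring. }
  split.
  - intros s Hs. rewrite (Econst s0 s Hs0 Hs).
    destruct (F s Hs) as [_ [_ [_ [_ [_ [_ [_ [Hpq [Hf [Hxx [Hvv Hxv]]]]]]]]]]].
    assert (Hg := gram d (v s) (xi s) Hvv Hxx Hxv).
    rewrite Hdd, (Hc s Hs) in Hg. fold (mu s) (x s) (y s) in Hg.
    assert (Hsc := sin2_cos2 omega). unfold Rsqr in Hsc. fold c in Hsc.
    unfold e.
    transitivity ((x s * p s + y s * q s) ^ 2 + (p s * y s - q s * x s) ^ 2); [rewrite Hf; ring|].
    transitivity ((x s ^ 2 + y s ^ 2) * (p s ^ 2 + q s ^ 2)); [ring|].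
    rewrite Hpq. nra.
  - intros s Hs.
    destruct (F s Hs) as [Dx [Dy [HA [Dp [Dq [HN [HN2 _]]]]]]].
    destruct (Hxy s Hs) as [Ex Ey].
    assert (D1 : is_derive x s (e s0 * (K s * W s / N s ^ 3))).
    { apply (is_derive_ext_loc (fun t => e s0 * p t)).
      - generalize (inI_loc _ _ _ Hs). apply filter_imp. intros t Ht.
        symmetry; apply (Hxy t Ht).
      - apply deriv_scal; auto. }
    assert (D2 : is_derive y s (e s0 * (T s * W s / N s ^ 3))).
    { apply (is_derive_ext_loc (fun t => e s0 * q t)).
      - generalize (inI_loc _ _ _ Hs). apply filter_imp. intros t Ht.
        symmetry; apply (Hxy t Ht).
      - apply deriv_scal; auto. }
    apply is_derive_unique in D1. apply is_derive_unique in Dx.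
    apply is_derive_unique in D2. apply is_derive_unique in Dy.
    rewrite Dx in D1. rewrite Dy in D2.
    assert (HsK : K s * (c - e s0 * sigma_v G K T s) = 0).
    { unfold sigma_v. change (sqrt (T s ^ 2 + K s ^ 2)) with (N s).
      rewrite <- HN2. fold (W s).
      rewrite Ey in D1. unfold q in D1; cbv beta in D1.
      transitivity ((G s * (e s0 * (- K s / N s)) + K s * c) - e s0 * (K s * W s / N s ^ 3));
        [field; lra|].
      rewrite D1. ring. }
    assert (HsT : T s * (c - e s0 * sigma_v G K T s) = 0).
    { unfold sigma_v. change (sqrt (T s ^ 2 + K s ^ 2)) with (N s).
      rewrite <- HN2. fold (W s).
      rewrite Ex in D2. unfold p in D2; cbv beta in D2.
      transitivity ((- G s * (e s0 * (T s / N s)) + T s * c) - e s0 * (T s * W s / N s ^ 3));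
        [field; lra|].
      rewrite D2. ring. }
    destruct (Req_dec (c - e s0 * sigma_v G K T s) 0) as [E|E]; [lra|].
    exfalso. apply (Hnz s Hs).
    apply Rmult_integral in HsK. apply Rmult_integral in HsT.
    destruct HsK; [|tauto]. destruct HsT; [|tauto]. rewrite H, H0; reflexivity.
Qed.

Lemma dot_D a u b w c z e :
  dot (vadd (vadd (vscal a u) (vscal b w)) (vscal c z)) e = a * dot u e + b * dot w e + c * dot z e.
Proof. unfold dot, vadd, vscal, mkv, vx, vy, vz; simpl; ring. Qed.

Lemma dot_DD a u b w c z :
  let D := vadd (vadd (vscal a u) (vscal b w)) (vscal c z) in
  dot D D = a^2 * dot u u + b^2 * dot w w + c^2 * dot z z + 2*a*b*dot u w + 2*a*c*dot u z + 2*b*c*dot w z.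
Proof. unfold dot, vadd, vscal, mkv, vx, vy, vz; simpl; ring. Qed.

Lemma dot_sym u w : dot u w = dot w u.
Proof. unfold dot; ring. Qed.

Lemma comp_eq A B : dot A (mkv 1 0 0) = dot B (mkv 1 0 0) ->
  dot A (mkv 0 1 0) = dot B (mkv 0 1 0) -> dot A (mkv 0 0 1) = dot B (mkv 0 0 1) ->
  forall u, dot u A = dot u B.
Proof.
  destruct A as [[a1 a2] a3]; destruct B as [[b1 b2] b3].
  unfold dot, mkv, vx, vy, vz; simpl. intros E1 E2 E3 u.
  assert (a1 = b1) by lra. assert (a2 = b2) by lra. assert (a3 = b3) by lra. subst. reflexivity.
Qed.

Lemma part1conv a b r xi v G K T :
  Myller_configuration a b r xi v G K T ->
  (forall s, inI a b s -> (T s, K s) <> (0, 0)) ->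
  (exists c0, forall s, inI a b s -> sigma_v G K T s = c0) -> v_helix a b v.
Proof.
  intros [Hr [Hxi [Hv [HG [HK [HT Hloc]]]]]] Hnz [c0 Hc0].
  destruct (classic (exists s0, inI a b s0)) as [[s0 Hs0]|Hno].
  2:{ exists (mkv 1 0 0), 0. split.
      - unfold dot, mkv, vx, vy, vz; simpl; ring.
      - intros s Hs; exfalso; apply Hno; eauto. }
  set (S := cos (atan c0)). set (C := sin (atan c0)).
  assert (HS : 0 < S).
  { unfold S. rewrite cos_atan. apply Rdiv_lt_0_compat; [lra|]. apply sqrt_lt_R0.
    unfold Rsqr; nra. }
  assert (HC : C = S * c0).
  { pose proof (tan_atan c0) as Ht. unfold tan in Ht. fold S C in Ht.
    rewrite <- Ht. field. lra. }
  assert (HSC : S ^ 2 + C ^ 2 = 1).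
  { pose proof (sin2_cos2 (atan c0)) as H. unfold Rsqr in H. fold S C in H. lra. }
  set (mu := fun t => cross (v t) (xi t)).
  set (N := fun t => sqrt (T t ^ 2 + K t ^ 2)).
  set (p := fun t => T t / N t).
  set (q := fun t => - K t / N t).
  set (W := fun t => Derive T t * K t - T t * Derive K t).
  set (D := fun t => vadd (vadd (vscal (S * p t) (xi t)) (vscal (S * q t) (mu t))) (vscal C (v t))).
  assert (Dconst : forall w s1 s2, inI a b s1 -> inI a b s2 -> dot (D s1) w = dot (D s2) w).
  { intros w. apply const_on. intros s Hs.
    destruct (Hloc s Hs) as [_ [Hxx [Hvv [Hxv [Dxi [Dmu Dv]]]]]].
    assert (Hp : 0 < T s ^ 2 + K s ^ 2) by (apply pos_TK; auto).
    assert (HN : 0 < N s) by (apply sqrt_lt_R0; auto).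
    assert (HN2 : N s * N s = T s ^ 2 + K s ^ 2) by (apply sqrt_sqrt; lra).
    assert (Dp : is_derive p s (K s * W s / N s ^ 3)).
    { apply p_derive; auto; eapply smooth_ex; eauto. }
    assert (Dq : is_derive q s (T s * W s / N s ^ 3)).
    { apply q_derive; auto; eapply smooth_ex; eauto. }
    pose proof (dot_derive _ _ _ w Dxi) as DX. rewrite dot_lin in DX.
    pose proof (dot_derive _ _ _ w Dmu) as DM. rewrite dot_lin in DM.
    pose proof (dot_derive _ _ _ w Dv) as DV. rewrite dot_lin in DV.
    pose proof (deriv_F _ _ _ _ _ S C s _ _ _ _ _ Dp Dq DX DM DV) as DF.
    assert (Hsig := Hc0 s Hs). unfold sigma_v in Hsig.
    change (sqrt (T s ^ 2 + K s ^ 2)) with (N s) in Hsig. rewrite <- HN2 in Hsig.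
    fold (W s) in Hsig.
    apply (is_derive_ext (fun t => S * p t * dot (xi t) w + S * q t * dot (mu t) w + C * dot (v t) w)).
    { intros t. assert (Et : S * p t * dot (xi t) w + S * q t * dot (mu t) w + C * dot (v t) w = dot (D t) w)
        by (unfold D; rewrite dot_D; ring). exact Et. }
    match type of DF with is_derive _ _ ?l => replace 0 with l; [exact DF|] end.
    set (X := dot (xi s) w) in *. set (M := dot (mu s) w) in *. set (V := dot (v s) w) in *.
    change (dot (cross (v s) (xi s)) w) with M.
    transitivity (X * K s * (S * ((W s + N s * N s * G s) / N s ^ 3) - C)
                 + M * T s * (S * ((W s + N s * N s * G s) / N s ^ 3) - C)).
    - unfold p, q. field. lra.
    - rewrite Hsig, HC. ring. }
  exists (D s0), (PI / 2 - atan c0).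
  assert (Hcomp : forall t u, inI a b t -> dot u (D s0) = dot u (D t)).
  { intros t u Ht.
    assert (E1 := Dconst (mkv 1 0 0) s0 t Hs0 Ht).
    assert (E2 := Dconst (mkv 0 1 0) s0 t Hs0 Ht).
    assert (E3 := Dconst (mkv 0 0 1) s0 t Hs0 Ht).
    apply comp_eq; auto. }
  assert (Hfr : forall t, inI a b t -> dot (xi t) (xi t) = 1 /\ dot (v t) (v t) = 1 /\
      dot (xi t) (v t) = 0 /\ dot (mu t) (mu t) = 1 /\ dot (v t) (mu t) = 0 /\ dot (xi t) (mu t) = 0 /\
      p t ^ 2 + q t ^ 2 = 1).
  { intros t Ht. destruct (Hloc t Ht) as [_ [Hxx [Hvv [Hxv _]]]].
    destruct (frame_facts _ _ Hvv Hxx Hxv) as [A1 [A2 A3]].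
    assert (Hp : 0 < T t ^ 2 + K t ^ 2) by (apply pos_TK; auto).
    assert (HN : 0 < N t) by (apply sqrt_lt_R0; auto).
    assert (HN2 : N t * N t = T t ^ 2 + K t ^ 2) by (apply sqrt_sqrt; lra).
    repeat split; auto.
    unfold p, q. field_simplify; [|lra]. rewrite <- HN2. field. lra. }
  split.
  - destruct (Hfr s0 Hs0) as [A1 [A2 [A3 [A4 [A5 [A6 A7]]]]]].
    unfold D. rewrite dot_DD. rewrite A1, A2, A4, A6, A3.
    rewrite (dot_sym (mu s0) (v s0)), A5.
    transitivity (S ^ 2 * (p s0 ^ 2 + q s0 ^ 2) + C ^ 2); [ring|]. rewrite A7. lra.
  - intros t Ht. rewrite (Hcomp t (v t) Ht).
    destruct (Hfr t Ht) as [A1 [A2 [A3 [A4 [A5 [A6 A7]]]]]].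
    rewrite cos_shift. fold C.
    unfold D. rewrite dot_sym, dot_D. rewrite A2, A3, (dot_sym (mu t) (v t)), A5. ring.
Qed.

Theorem theorem24 (a b : Rbar) (r xi v : R -> vec3) (G K T : R -> R) :
  Rbar_lt a b ->
  Myller_configuration a b r xi v G K T ->
  (forall s, inI a b s -> (T s, K s) <> (0, 0)) ->
  (v_helix a b v <-> exists c, forall s, inI a b s -> sigma_v G K T s = c) /\
  (forall (d : vec3) (omega : R), v_helix_with a b v d omega ->
     sin omega <> 0 /\
     exists eps : R, (eps = 1 \/ eps = -1) /\
       forall s, inI a b s -> cos omega / sin omega = eps * sigma_v G K T s).
Proof.
  intros Hab HM Hnz.
  destruct (inhabited_I _ _ Hab) as [s1 Hs1].
  assert (P2' : forall d omega, v_helix_with a b v d omega ->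
     sin omega <> 0 /\
     exists eps : R, (eps = 1 \/ eps = -1) /\
       forall s, inI a b s -> cos omega / sin omega = eps * sigma_v G K T s).
  { intros d omega Hh. destruct (part2 _ _ _ _ _ _ _ _ _ _ HM Hnz Hh) as [e0 [He Hce]].
    assert (Hsc := sin2_cos2 omega). unfold Rsqr in Hsc.
    assert (Hsin : sin omega <> 0).
    { intro H0. specialize (He s1 Hs1). rewrite H0 in He. assert (e0 = 0) by nra.
      specialize (Hce s1 Hs1). subst e0. rewrite H0 in Hsc. nra. }
    split; auto. exists (e0 / sin omega). split.
    - assert (Hq : (e0 / sin omega - 1) * (e0 / sin omega + 1) = 0).
      { specialize (He s1 Hs1).
        transitivity ((e0 ^ 2 - sin omega ^ 2) / (sin omega ^ 2)); [field; auto|].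
        rewrite He. field. auto. }
      apply Rmult_integral in Hq. destruct Hq; [left|right]; lra.
    - intros s Hs. rewrite (Hce s Hs). field. auto. }
  split; [split|exact P2'].
  - intros [d [omega Hh]]. destruct (P2' d omega Hh) as [Hs [eps [Heps Hf]]].
    exists (cos omega / sin omega / eps). intros s Hs'. rewrite (Hf s Hs').
    field. destruct Heps; lra.
  - apply (part1conv a b r xi v G K T); auto.
Qed.
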